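(* Assume $H$ is non-degenerate, i.e. $\lambda_N < \lambda_{N+1}$, and denote by $P_{\infty,\infty}$ the minimizer of $\min_{P} \operatorname{tr}(HP)$ subject to $\operatorname{tr} P = N$, $P = P^{\mathrm{T}}$, $0 \preceq P \preceq I$. Let $P_{\infty,\eta}$ be any minimizer of $\min_{P} \operatorname{tr}(HP) + \frac{1}{\eta}\|P\|_1$ subject to the same constraints. Then (a) $0 \le \mathcal{E}_{\infty,\infty}(P_{\infty,\eta}) - \mathcal{E}_{\infty,\infty}(P_{\infty,\infty}) \le \frac{1}{\eta}\|P_{\infty,\infty}\|_1$; (b) $\|P_{\infty,\eta} - P_{\infty,\infty}\|_F^2 \le \frac{2}{\eta}\frac{\|P_{\infty,\infty}\|_1}{\lambda_{N+1}-\lambda_N}$. In particular, $\lim_{\eta\to\infty}\mathcal{E}_{\infty,\infty}(P_{\infty,\eta}) = \mathcal{E}_{\infty,\infty}(P_{\infty,\infty})$ and $\lim_{\eta\to\infty}\|P_{\infty,\eta} - P_{\infty,\infty}\|_F = 0$.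
   Context: $H$ is an $n\times n$ real symmetric matrix (discrete Hamiltonian) with eigenpairs $\{\lambda_i,\phi_i\}_{i=1}^n$, eigenvalues ordered increasingly; $N$ is a positive integer (number of electrons). $\|P\|_1 = \sum_{i,j}|p_{ij}|$ denotes the entrywise $\ell_1$ norm of a matrix, $\|\cdot\|_F$ the Frobenius norm, and $A\preceq B$ means $B-A$ is symmetric positive semidefinite. The energy is $\mathcal{E}_{\infty,\infty}(P) = \operatorname{tr}(HP)$, and $\eta>0$ is the $\ell_1$ penalty parameter. The zero temperature minimizer is $P_{\infty,\infty} = \sum_{i=1}^N \phi_i\phi_i^{\mathrm{T}}$. *)

(* Defs.v *)
From HB Require Import structures.
From mathcomp Require Import all_boot all_order all_algebra.
From mathcomp Require Import all_classical all_reals all_analysis.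
Set Implicit Arguments. Unset Strict Implicit. Unset Printing Implicit Defensive.
Import Order.TTheory GRing.Theory Num.Theory.
Local Open Scope ring_scope.

Section Defs.
Variables (R : realType) (n : nat).

Definition psd (A : 'M[R]_n) : Prop :=
  A^T = A /\ forall v : 'cV[R]_n, 0 <= (v^T *m A *m v) 0 0.
Definition mx_le (A B : 'M[R]_n) : Prop := psd (B - A).

Definition l1norm (P : 'M[R]_n) : R := \sum_i \sum_j `|P i j|.
Definition frob (P : 'M[R]_n) : R := Num.sqrt (\sum_i \sum_j (P i j) ^+ 2).

Definition energy (H P : 'M[R]_n) : R := \tr (H *m P).

Definition feasible (N : nat) (P : 'M[R]_n) : Prop :=
  \tr P = N%:R /\ P^T = P /\ mx_le 0 P /\ mx_le P 1%:M.

Definition penalized (H : 'M[R]_n) (eta : R) (P : 'M[R]_n) : R :=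
  energy H P + eta^-1 * l1norm P.

Definition is_penalized_minimizer (H : 'M[R]_n) (N : nat) (eta : R)
    (P : 'M[R]_n) : Prop :=
  feasible N P /\ forall Q, feasible N Q -> penalized H eta P <= penalized H eta Q.

(* zero-temperature density matrix sum_{i<N} phi_i phi_i^T (0-based) *)
Definition P_zero (N : nat) (phi : nat -> 'cV[R]_n) : 'M[R]_n :=
  \sum_(i < N) phi i *m (phi i)^T.

End Defs.

(* Main.v *)
Require Import Defs.
From HB Require Import structures.
From mathcomp Require Import all_boot all_order all_algebra.
From mathcomp Require Import all_classical all_reals all_analysis.
Import Order.TTheory GRing.Theory Num.Theory.
Import numFieldNormedType.Exports.
Local Open Scope classical_set_scope.
Local Open Scope ring_scope.
From mathcomp Require Import ring lra.

Set Implicit Arguments. Unset Strict Implicit.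
Section LA.
Variables (R : realType) (n : nat) (phi : nat -> 'cV[R]_n).
Hypothesis ortho : forall i j : nat, (i < n)%N -> (j < n)%N ->
     (phi i)^T *m phi j = ((i == j)%:R)%:M.

Definition qf (X : 'M[R]_n) (v : 'cV[R]_n) : R := (v^T *m X *m v) 0 0.

Lemma sum_phi1 : \sum_(i < n) phi i *m (phi i)^T = 1%:M.
Proof.
pose U : 'M[R]_n := \matrix_(r, c) phi c r 0.
have UtU : U^T *m U = 1%:M.
  apply/matrixP => i j; rewrite !mxE.
  have := congr1 (fun M : 'M[R]_1 => M 0 0) (@ortho i j (ltn_ord i) (ltn_ord j)).
  rewrite /= !mxE eqxx mulr1n => <-.
  by apply: eq_bigr => k _; rewrite !mxE.
rewrite -(mulmx1C UtU); apply/matrixP => r s; rewrite !mxE summxE.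
by apply: eq_bigr => k _; rewrite !mxE big_ord1 !mxE.
Qed.

Lemma trace_phi (X : 'M[R]_n) : \tr X = \sum_(i < n) qf X (phi i).
Proof.
rewrite -{1}(mulmx1 X) -sum_phi1 mulmx_sumr raddf_sum.
apply: eq_bigr => i _. rewrite mulmxA; change (\tr (X *m phi i *m (phi i)^T) = qf X (phi i)); rewrite mxtrace_mulC mulmxA trace_mx11.
by [].
Qed.

Lemma qf_rank1 (w v : 'cV[R]_n) : qf (w *m w^T) v = ((w^T *m v) 0 0) ^+ 2.
Proof.
have e : (v^T *m w) 0 0 = (w^T *m v) 0 0.
  by rewrite -[v^T *m w]trmxK trmx_mul trmxK mxE.
by rewrite /qf !mulmxA -(mulmxA (v^T *m w)) mxE big_ord1 expr2 e.
Qed.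

Definition Qs (S : pred 'I_n) := \sum_(i < n | S i) phi i *m (phi i)^T.

Lemma Qs_sym S : (Qs S)^T = Qs S.
Proof. rewrite /Qs raddf_sum; apply: eq_bigr => i _ /=. by rewrite trmx_mul trmxK. Qed.

Lemma qf_sum (S : pred 'I_n) (F : 'I_n -> 'M[R]_n) v :
  qf (\sum_(i < n | S i) F i) v = \sum_(i < n | S i) qf (F i) v.
Proof. by rewrite /qf mulmx_sumr mulmx_suml summxE. Qed.

Lemma Qs_psd S : psd (Qs S).
Proof.
split; first exact: Qs_sym.
move=> v; rewrite -/(qf _ v) qf_sum; apply: sumr_ge0 => i _.
by rewrite qf_rank1 sqr_ge0.
Qed.

Lemma qfB (X Y : 'M[R]_n) v : qf (X - Y) v = qf X v - qf Y v.
Proof.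
have h : forall (A B : 'M[R]_1), (A - B) 0 0 = A 0 0 - B 0 0 by move=> A B; rewrite !mxE.
by rewrite /qf mulmxBr mulmxBl h.
Qed.

Lemma qf_phi1 i : (i < n)%N -> qf 1%:M (phi i) = 1.
Proof. by move=> hi; rewrite /qf mulmx1 ortho // eqxx mxE. Qed.

Lemma Pzero_Qs N : (N <= n)%N -> P_zero N phi = Qs (fun i => (i < N)%N).
Proof. by move=> hN; rewrite /P_zero (big_ord_widen n (fun i => phi i *m (phi i)^T)). Qed.

Lemma one_minus_Qs N : 1%:M - Qs (fun i => (i < N)%N) = Qs (fun i => ~~ (i < N)%N).
Proof. by rewrite -sum_phi1 /Qs (bigID (fun i : 'I_n => (i < N)%N)) /= addrAC subrr add0r. Qed.

Lemma Qs_phi S (i : 'I_n) : Qs S *m phi i = (S i)%:R *: phi i.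
Proof.
rewrite /Qs mulmx_suml.
under eq_bigr => j _ do rewrite -mulmxA (@ortho j i (ltn_ord j) (ltn_ord i)) mul_mx_scalar.
case: (boolP (S i)) => Si.
  rewrite (bigD1 i) //= eqxx scale1r big1 ?addr0 // => j /andP[_ hji].
  by move: hji; rewrite -val_eqE /= => /negbTE ->; rewrite scale0r.
rewrite big1 ?scale0r // => j Sj.
have hji : j != i by apply: contraNneq Si => <-.
by move: hji; rewrite -val_eqE /= => /negbTE ->; rewrite scale0r.
Qed.

Lemma qf_XQ X S (i : 'I_n) : qf (X *m Qs S) (phi i) = (S i)%:R * qf X (phi i).
Proof. by rewrite /qf mulmxA -(mulmxA _ (Qs S)) Qs_phi -scalemxAr mxE. Qed.

Lemma qf_Q S (i : 'I_n) : qf (Qs S) (phi i) = (S i)%:R.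
Proof. by rewrite -[Qs S]mul1mx qf_XQ qf_phi1 ?mulr1. Qed.

Lemma qfD (X Y : 'M[R]_n) v : qf (X + Y) v = qf X v + qf Y v.
Proof. by rewrite /qf mulmxDr mulmxDl mxE. Qed.

Lemma qf_mul (X A : 'M[R]_n) v : qf X (A *m v) = qf (A^T *m X *m A) v.
Proof. by rewrite /qf trmx_mul !mulmxA. Qed.

Lemma qf_sq_le (P : 'M[R]_n) v : P^T = P -> psd P -> psd (1%:M - P) ->
  qf (P *m P) v <= qf P v.
Proof.
move=> sP [_ pP] [_ pI].
have e : P - P *m P = (1%:M - P)^T *m P *m (1%:M - P) + P^T *m (1%:M - P) *m P.
  have tI : (1%:M - P)^T = 1%:M - P by rewrite raddfB /= trmx1 sP.
  rewrite tI sP !mulmxBl !mulmxBr !mul1mx !mulmx1 -!mulmxA.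
  by rewrite mulmxBl -mulmxA subrK.
rewrite -subr_ge0 -qfB e qfD -!qf_mul.
by apply: addr_ge0; [apply: pP | apply: pI].
Qed.

Lemma frob_sq (A : 'M[R]_n) : A^T = A -> frob A ^+ 2 = \tr (A *m A).
Proof.
move=> sA; rewrite /frob sqr_sqrtr; last by apply: sumr_ge0 => i _; apply: sumr_ge0 => j _; apply: sqr_ge0.
rewrite /mxtrace; apply: eq_bigr => i _; rewrite mxE; apply: eq_bigr => j _.
by rewrite expr2 -{2}sA mxE.
Qed.

End LA.
Unset Implicit Arguments.

Theorem theorem1 (R : realType) (n N : nat) (H : 'M[R]_n)
    (lam : nat -> R) (phi : nat -> 'cV[R]_n) :
  H^T = H ->
  (forall i : nat, (i < n)%N -> H *m phi i = lam i *: phi i) ->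
  (forall i j : nat, (i < n)%N -> (j < n)%N ->
     (phi i)^T *m phi j = ((i == j)%:R)%:M) ->
  (forall i j : nat, (i <= j)%N -> (j < n)%N -> lam i <= lam j) ->
  (0 < N)%N -> (N < n)%N ->
  lam N.-1 < lam N ->
  let Pinf := P_zero N phi in
  (forall (eta : R) (P : 'M[R]_n), 0 < eta ->
     is_penalized_minimizer H N eta P ->
     (0 <= energy H P - energy H Pinf /\
      energy H P - energy H Pinf <= eta^-1 * l1norm Pinf) /\
     frob (P - Pinf) ^+ 2 <= 2 / eta * (l1norm Pinf / (lam N - lam N.-1)))
  /\
  (forall Peta : R -> 'M[R]_n,
     (forall eta : R, 0 < eta -> is_penalized_minimizer H N eta (Peta eta)) ->
     (energy H (Peta eta) @[eta --> +oo] --> energy H Pinf) /\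
     (frob (Peta eta - Pinf) @[eta --> +oo] --> 0)).
Proof.
move=> hsym heig ortho hmono hN0 hNn hgap Pinf.
pose S := (fun i : 'I_n => (i < N)%N).
pose b := (fun i : 'I_n => (S i)%:R : R).
have hQ : Pinf = Qs phi S by rewrite /Pinf (@Pzero_Qs _ _ phi _ (ltnW hNn)).
have Een : forall P, energy H P = \sum_(i < n) lam i * qf P (phi i).
  move=> P; rewrite /energy mxtrace_mulC (trace_phi ortho); apply: eq_bigr => i _.
  by rewrite /qf mulmxA -(mulmxA _ H) heig ?ltn_ord // -scalemxAr mxE.
have trQ : \tr Pinf = N%:R.
  rewrite /Pinf /P_zero raddf_sum /= -[N in RHS]card_ord -sumr_const.
  apply: eq_bigr => k _; rewrite mxtrace_mulC ortho ?eqxx ?(ltn_trans (ltn_ord k) hNn) //.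
  by rewrite mxtrace_scalar.
have sumb : \sum_(i < n) b i = N%:R.
  by rewrite -trQ (trace_phi ortho) hQ; apply: eq_bigr => i _; rewrite (qf_Q ortho).
have featQ : feasible N Pinf.
  split; first exact: trQ.
  split; first by rewrite hQ Qs_sym.
  split; first by rewrite /mx_le subr0 hQ; apply: Qs_psd.
  by rewrite /mx_le hQ (one_minus_Qs ortho); apply: Qs_psd.
have EQ : energy H Pinf = \sum_(i < n) lam i * b i.
  by rewrite Een; apply: eq_bigr => i _; rewrite hQ (qf_Q ortho).
have l1ge0 : forall P : 'M[R]_n, 0 <= l1norm P.
  by move=> P; apply: sumr_ge0 => i _; apply: sumr_ge0 => j _.
have gap0 : 0 < lam N - lam N.-1 by rewrite subr_gt0.
set g := lam N - lam N.-1.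
have part1 : forall (eta : R) (P : 'M[R]_n), 0 < eta ->
     is_penalized_minimizer H N eta P ->
     (0 <= energy H P - energy H Pinf /\
      energy H P - energy H Pinf <= eta^-1 * l1norm Pinf) /\
     frob (P - Pinf) ^+ 2 <= 2 / eta * (l1norm Pinf / g).
  move=> eta P eta0 [fP minP].
  case: fP => trP [sP [h0 h1]].
  move: h0 h1; rewrite /mx_le subr0 => h0 h1.
  pose d := fun i : 'I_n => qf P (phi i).
  have d0 : forall i, 0 <= d i by move=> i; case: h0 => _ /(_ (phi i)).
  have d1 : forall i, d i <= 1.
    move=> i; case: h1 => _ /(_ (phi i)).
    by rewrite -/(qf _ _) qfB (qf_phi1 ortho) ?ltn_ord // subr_ge0.
  have sumd : \sum_i d i = N%:R by rewrite -trP (trace_phi ortho).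
  have hdiff : energy H P - energy H Pinf <= eta^-1 * l1norm Pinf.
    have := minP _ featQ; rewrite /penalized.
    have ie : 0 <= eta^-1 by rewrite invr_ge0 ltW.
    have := mulr_ge0 ie (l1ge0 P); lra.
  have tPQ : \tr (P *m Pinf) = \sum_i b i * d i.
    by rewrite (trace_phi ortho) hQ; apply: eq_bigr => i _; rewrite (qf_XQ ortho).
  have tQQ : \tr (Pinf *m Pinf) = \sum_i b i * b i.
    by rewrite (trace_phi ortho) {2}hQ; apply: eq_bigr => i _; rewrite (qf_XQ ortho) hQ (qf_Q ortho).
  have sQ : Pinf^T = Pinf by case: featQ => _ [].
  have frobeq : frob (P - Pinf) ^+ 2 = \tr (P *m P) - 2 * \sum_i b i * d i + \sum_i b i * b i.
    rewrite frob_sq; last by rewrite raddfB /= sP sQ.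
    rewrite mulmxBl !mulmxBr !raddfB /= (mxtrace_mulC Pinf P) tPQ tQQ.
    lra.
  have tPP : \tr (P *m P) <= \sum_i d i.
    by rewrite (trace_phi ortho); apply: ler_sum => i _; apply: qf_sq_le.
  have key : forall i, g * (d i - 2 * (b i * d i) + b i * b i) <=
      2 * (lam i * d i - lam i * b i) - (lam N + lam N.-1) * (d i - b i).
    move=> i; rewrite /b /S; case: ltnP => hi /=.
      have hl : lam i <= lam N.-1.
        apply: hmono; first by rewrite -ltnS prednK.
        exact: leq_ltn_trans (leq_pred N) hNn.
      have h2 : 0 <= lam N.-1 - lam i by rewrite subr_ge0.
      have h3 : 0 <= 1 - d i by rewrite subr_ge0.
      have := mulr_ge0 h2 h3.
      rewrite /g mulr1n; nra.
    have hl : lam N <= lam i by apply: hmono => //; exact: ltn_ord.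
    have h2 : 0 <= lam i - lam N by rewrite subr_ge0.
    have := mulr_ge0 h2 (d0 i).
    rewrite /g mulr0n; nra.
  have ksum : \sum_(i < n) g * (d i - 2 * (b i * d i) + b i * b i) <=
    \sum_(i < n) (2 * (lam i * d i - lam i * b i) - (lam N + lam N.-1) * (d i - b i)).
    by apply: ler_sum => i _; exact: key.
  rewrite -mulr_sumr !sumrB !big_split /= -!mulr_sumr in ksum.
  have e1 : \sum_(i < n) - (2 * (b i * d i)) = - (2 * \sum_(i < n) b i * d i).
    by rewrite sumrN mulr_sumr.
  have e2 : \sum_(i < n) (lam i * d i - lam i * b i) =
     \sum_(i < n) lam i * d i - \sum_(i < n) lam i * b i by rewrite sumrB.
  have e3 : \sum_(i < n) (d i - b i) = \sum_(i < n) d i - \sum_(i < n) b i by rewrite sumrB.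
  rewrite e1 e2 e3 in ksum.
  have EP : energy H P = \sum_(i < n) lam i * d i := Een P.
  have F0 : 0 <= frob (P - Pinf) ^+ 2 := sqr_ge0 _.
  rewrite sumd sumb subrr mulr0 subr0 -EP -EQ in ksum.
  set X := (X in g * X <= _) in ksum.
  have X0 : 0 <= X by rewrite /X; lra.
  have gX : 0 <= g * X by apply: mulr_ge0 => //; exact: ltW.
  have FX : 0 <= (X - frob (P - Pinf) ^+ 2) * g.
    by apply: mulr_ge0; [rewrite /X; lra | exact: ltW].
  split; first by split; [lra | exact: hdiff].
  have -> : 2 / eta * (l1norm Pinf / g) = (2 * (eta^-1 * l1norm Pinf)) / g by ring.
  rewrite ler_pdivlMr //; lra.
split; first exact: part1.
move=> Peta hPeta.
have bnd := fun eta (eta0 : 0 < eta) => part1 eta (Peta eta) eta0 (hPeta eta eta0).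
have L0 := l1ge0 Pinf.
set L := l1norm Pinf in bnd L0.
split.
  apply/cvgrPdist_le => e e0; near=> eta.
  have eta0 : 0 < eta by near: eta; apply: nbhs_pinfty_gt; rewrite num_real.
  have etab : L / e < eta by near: eta; apply: nbhs_pinfty_gt; rewrite num_real.
  have [[h1 h2] _] := bnd eta eta0.
  rewrite distrC ger0_norm //.
  apply: le_trans h2 _.
  rewrite ltr_pdivrMr // in etab.
  rewrite mulrC ler_pdivrMr //; lra.
apply/cvgrPdist_le => e e0; near=> eta.
have eta0 : 0 < eta by near: eta; apply: nbhs_pinfty_gt; rewrite num_real.
have etab : 2 * (L / g) / e ^+ 2 < eta.
  by near: eta; apply: nbhs_pinfty_gt; rewrite num_real.
have [_ h3] := bnd eta eta0.
have fr0 : 0 <= frob (Peta eta - Pinf) by rewrite /frob sqrtr_ge0.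
rewrite sub0r normrN ger0_norm //.
have e20 : 0 < e ^+ 2 by rewrite exprn_gt0.
rewrite ltr_pdivrMr // in etab.
have h4 : 2 / eta * (L / g) = 2 * (L / g) / eta by ring.
rewrite h4 ler_pdivlMr // in h3.
have h5 : frob (Peta eta - Pinf) ^+ 2 * eta <= e ^+ 2 * eta by lra.
rewrite ler_pM2r // in h5.
nra.
Unshelve. all: by end_near.
Qed.
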